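(* Let $n\ge2$, $s\in\mathbb{R}$, $0\le b<\frac12$ and $0<\varepsilon\le1-2b$. For $(\xi',\xi_n,\tau)\in\mathbb{R}^{n-1}\times\mathbb{R}\times\mathbb{R}$ define $$Q_1(\xi',\xi_n,\tau)=\chi_{\{1<\xi_n^2\le\frac12|\tau+\xi'^2|\}}\frac{(1+\xi'^2+|\tau+\xi'^2|)^s(1+|\tau+\xi'^2|)^{1/2}\xi_n}{(1+|\tau+\xi'^2+\xi_n^2|)^{2-\varepsilon}}.$$ Then for all $(\xi',\xi_n,\tau)\in\mathbb{R}^{n+1}$, $$Q_1\lesssim\begin{cases}(1+\xi'^2+\xi_n^2)^s(1+|\tau+\xi'^2+\xi_n^2|)^{-2b},&-\frac12\le s\le\frac12,\\ \big[(1+\xi'^2+\xi_n^2)^s+(1+|\tau|)^s\big](1+|\tau+\xi'^2+\xi_n^2|)^{-2b},&s<-\frac12\text{ or }s>\frac12.\end{cases}$$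
   Context: $\xi'^2=|\xi'|^2$; $\chi_A$ is the characteristic function of the set $A$ (here the set of $(\xi',\xi_n,\tau)$ with $1<\xi_n^2\le\frac12|\tau+\xi'^2|$). *)

(* Defs.v *)
From HB Require Import structures.
From mathcomp Require Import all_boot all_order all_algebra.
From mathcomp Require Import all_classical all_reals all_analysis.
Set Implicit Arguments. Unset Strict Implicit. Unset Printing Implicit Defensive.
Import Order.TTheory GRing.Theory Num.Theory.
Local Open Scope ring_scope.

Definition sqnorm (R : realType) (m : nat) (xi' : 'rV[R]_m) : R :=
  \sum_(i < m) (xi' 0 i) ^+ 2.

Definition Q1 (R : realType) (m : nat) (s eps : R)
  (xi' : 'rV[R]_m) (xn tau : R) : R :=
  let a := sqnorm xi' in
  if (1 < xn ^+ 2) && (xn ^+ 2 <= `|tau + a| / 2) then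
    (1 + a + `|tau + a|) `^ s * (1 + `|tau + a|) `^ (2^-1) * xn
      / (1 + `|tau + a + xn ^+ 2|) `^ (2 - eps)
  else 0.

Definition Q1bound (R : realType) (m : nat) (s b : R)
  (xi' : 'rV[R]_m) (xn tau : R) : R :=
  let a := sqnorm xi' in
  if (- 2^-1 <= s) && (s <= 2^-1) then
    (1 + a + xn ^+ 2) `^ s * (1 + `|tau + a + xn ^+ 2|) `^ (- (2 * b))
  else
    ((1 + a + xn ^+ 2) `^ s + (1 + `|tau|) `^ s)
      * (1 + `|tau + a + xn ^+ 2|) `^ (- (2 * b)).

(* Main.v *)
Require Import Defs.
From HB Require Import structures.
From mathcomp Require Import all_boot all_order all_algebra.
From mathcomp Require Import all_classical all_reals all_analysis.
From mathcomp Require Import lra ring.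
Import Order.TTheory GRing.Theory Num.Theory.
Local Open Scope ring_scope.
Section S.
Variable R : realType.
Implicit Types s u v : R.
Lemma pw_le_pos s u v : 0 <= s -> 0 <= u -> u <= v -> u `^ s <= v `^ s.
Proof. move=> s0 u0 uv; apply: ge0_ler_powR => //; rewrite nnegrE //; exact: le_trans uv. Qed.
Lemma pw_le_neg s u v : s <= 0 -> 0 < u -> u <= v -> v `^ s <= u `^ s.
Proof.
move=> s0 u0 uv; rewrite -(opprK s) (powRN v (-s)) (powRN u (-s)).
have v0 : 0 < v by exact: lt_le_trans uv.
rewrite lef_pV2 ?posrE ?powR_gt0 //; apply: pw_le_pos => //; [lra| exact: ltW].
Qed.
Lemma pwD u p q : 0 < u -> u `^ (p + q) = u `^ p * u `^ q.
Proof. by move=> u0; apply: powRD; apply/implyP => _; rewrite gt_eqF. Qed.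
Lemma pw1 u : 0 <= u -> u `^ 1 = u. Proof. exact: powRr1. Qed.
Lemma pw2 u : 0 <= u -> u `^ 2 = u ^+ 2. Proof. by move=> u0; rewrite -powR_mulrn. Qed.
Lemma alg (p x Y d1 d2 t : R) : 0 <= p -> 0 < x -> 0 < Y -> 0 < d1 -> 0 < d2 -> 0 < t ->
  Y * Y * t / 4 <= d1 -> d2 <= 2 * t ->
  p * Y * x / d1 <= 8 * (p * x / Y) * d2^-1.
Proof.
move=> p0 x0 Y0 d10 d20 t0 h1 h2.
rewrite ler_pdivrMr //.
have e : p * Y * x = 8 * (p * x / Y) * (2 * t)^-1 * (Y * Y * t / 4).
  by field; rewrite !gt_eqF.
rewrite e; apply: ler_pM.
- apply: mulr_ge0; [apply: mulr_ge0; [lra|] | ]; rewrite ?invr_ge0; try nra.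
  apply: divr_ge0; nra.
- nra.
- apply: ler_pM; [ |rewrite invr_ge0; nra| lra | ].
  apply: mulr_ge0; [lra|]; apply: divr_ge0; nra.
  by rewrite lef_pV2 ?posrE //; nra.
- done.
Qed.
Lemma core (s b eps a tau x : R) : 0 <= b -> b < 2^-1 -> 0 < eps -> eps <= 1 - 2 * b ->
  0 <= a -> 0 < x -> 1 < x ^+ 2 -> x ^+ 2 <= `|tau + a| / 2 ->
  (1 + a + `|tau + a|) `^ s * (1 + `|tau + a|) `^ (2^-1) * x
      / (1 + `|tau + a + x ^+ 2|) `^ (2 - eps)
  <= 8 * ((1 + a + `|tau + a|) `^ s * x / (1 + `|tau + a|) `^ (2^-1))
     * (1 + `|tau + a + x ^+ 2|) `^ (- (2 * b)).
Proof.
move=> b0 bh e0 eb a0 x0 x1 xA.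
have BA1 : `|tau + a| <= `|tau + a + x ^+ 2| + x ^+ 2.
  rewrite -{1}(addrK (x ^+ 2) (tau + a)).
  apply: le_trans (ler_normD _ _) _; rewrite normrN (ger0_norm (sqr_ge0 x)) //.
have BA2 : `|tau + a + x ^+ 2| <= `|tau + a| + x ^+ 2.
  apply: le_trans (ler_normD _ _) _; rewrite (ger0_norm (sqr_ge0 x)) //.
move: xA BA1 BA2 (normr_ge0 (tau + a)) (normr_ge0 (tau + a + x ^+ 2)).
move: (`|tau + a|) (`|tau + a + x ^+ 2|) => A B xA BA1 BA2 A0 B0.
have S0 : 0 < 1 + A by lra.
have D0 : 0 < 1 + B by lra.
have Y0 : 0 < (1 + A) `^ (2^-1) by exact: powR_gt0.
have YY : (1 + A) `^ (2^-1) * (1 + A) `^ (2^-1) = 1 + A.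
  rewrite -pwD //; have -> : (2^-1 : R) + 2^-1 = 1 by field.
  by rewrite pw1 //; lra.
rewrite powRN.
apply: (@alg _ _ _ _ _ ((1 + A) `^ (2 * b))) => //; first exact: powR_ge0; first exact: powR_gt0; first exact: powR_gt0; first exact: powR_gt0.
- (* D^(2-eps) >= Y Y S^(2b) / 4 *)
  have h1 : ((1 + A) / 2) `^ (2 - eps) <= (1 + B) `^ (2 - eps).
    apply: pw_le_pos; lra.
  apply: le_trans h1.
  rewrite powRM; [|lra|lra].
  have h2 : (2^-1 : R) `^ 2 <= (2^-1) `^ (2 - eps).
    apply: ger_powR; [apply/andP; split; lra | lra].
  rewrite pw2 in h2; last lra.
  have h3 : (1 + A) `^ (1 + 2 * b) <= (1 + A) `^ (2 - eps).
    apply: ler_powR; lra.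
  rewrite pwD // pw1 in h3; last lra.
  rewrite -[X in X * _ <= _ `^ (2 - eps)]YY in h3.
  have p1 : 0 <= (1 + A) `^ (2 * b) by exact: powR_ge0.
  have p2 : 0 <= (2^-1 : R) `^ (2 - eps) by exact: powR_ge0.
  have p3 : 0 <= (1 + A) `^ (2 - eps) by exact: powR_ge0.
  have -> : (1 + A) `^ (2^-1) * (1 + A) `^ (2^-1) * (1 + A) `^ (2 * b) / 4
     = ((1 + A) `^ (2^-1) * (1 + A) `^ (2^-1) * (1 + A) `^ (2 * b)) * (2^-1) ^+ 2.
    by field.
  apply: ler_pM => //; first by rewrite YY; nra.
- (* D^(2b) <= 2 S^(2b) *)
  have h1 : (1 + B) `^ (2 * b) <= (2 * (1 + A)) `^ (2 * b).
    apply: pw_le_pos; lra.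
  apply: le_trans h1 _.
  rewrite powRM; [|lra|lra].
  apply: ler_wpM2r; first exact: powR_ge0.
  have h : (2 : R) `^ (2 * b) <= 2 `^ 1 by apply: ler_powR; lra.
  by rewrite pw1 in h; lra.
Qed.
Lemma sum_pow_bound (s M T : R) : 0 <= s -> 0 < M -> 0 < T ->
  (2 * M + T) `^ s <= 3 `^ s * (M `^ s + T `^ s).
Proof.
move=> s0 M0 T0.
have pM := powR_ge0 M s; have pT := powR_ge0 T s; have p2 := powR_ge0 3 s.
have [MT|TM] := lerP M T.
- apply: le_trans (_ : (3 * T) `^ s <= _).
    apply: pw_le_pos => //; lra.
  rewrite powRM; [|lra|lra]. by apply: ler_wpM2l => //; lra.
- apply: le_trans (_ : (3 * M) `^ s <= _).
    apply: pw_le_pos => //; lra.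
  rewrite powRM; [|lra|lra]. by apply: ler_wpM2l => //; lra.
Qed.

Lemma kbound (s a tau x : R) : 0 <= a -> 0 < x -> 1 < x ^+ 2 -> x ^+ 2 <= `|tau + a| / 2 ->
  (1 + a + `|tau + a|) `^ s * x / (1 + `|tau + a|) `^ (2^-1)
  <= (1 + 3 `^ s) * (if (- 2^-1 <= s) && (s <= 2^-1) then (1 + a + x ^+ 2) `^ s
                     else (1 + a + x ^+ 2) `^ s + (1 + `|tau|) `^ s).
Proof.
move=> a0 x0 x1 xA.
have At : `|tau + a| <= `|tau| + a.
  by apply: le_trans (ler_normD _ _) _; rewrite (ger0_norm a0).
move: xA At (normr_ge0 (tau + a)) (normr_ge0 tau).
move: (`|tau + a|) (`|tau|) => A Tt xA At A0 T0.
have S0 : 0 < 1 + A by lra.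
have Y0 : 0 < (1 + A) `^ (2^-1) by exact: powR_gt0.
have YY : (1 + A) `^ (2^-1) * (1 + A) `^ (2^-1) = 1 + A.
  rewrite -pwD //; have -> : (2^-1 : R) + 2^-1 = 1 by field.
  by rewrite pw1 //; lra.
move: Y0 YY; move: ((1 + A) `^ (2^-1)) => Y Y0 YY.
have xY : x <= Y by nra.
have xY1 : x / Y <= 1 by rewrite ler_pdivrMr // mul1r.
have xY0 : 0 <= x / Y by apply: divr_ge0; lra.
have M0 : 0 < 1 + a + x ^+ 2 by lra.
have pM := powR_ge0 (1 + a + x ^+ 2) s.
have pT := powR_ge0 (1 + Tt) s.
have pP := powR_ge0 (1 + a + A) s.
have c0 := powR_ge0 3 s.
rewrite -mulrA.
have [s0|s0] := lerP s 0.
- have h : (1 + a + A) `^ s <= (1 + a + x ^+ 2) `^ s by apply: pw_le_neg => //; lra.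
  apply: le_trans (_ : (1 + a + x ^+ 2) `^ s <= _); first nra.
  case: ifP => _; nra.
have [s1|s1] := lerP s (2^-1).
  rewrite ifT; last by apply/andP; split; lra.
  suff h : (1 + a + A) `^ s * x <= (1 + a + x ^+ 2) `^ s * Y.
    have : (1 + a + A) `^ s * (x / Y) <= (1 + a + x ^+ 2) `^ s.
      by rewrite mulrA ler_pdivrMr.
    nra.
  have hPM : (1 + a + A) * x ^+ 2 <= (1 + a + x ^+ 2) * (Y * Y) by rewrite YY; nra.
  have h1 : ((1 + a + A) * x ^+ 2) `^ s <= ((1 + a + x ^+ 2) * (Y * Y)) `^ s.
    apply: pw_le_pos => //; [lra| nra].
  rewrite [((1 + a + A) * _) `^ s]powRM in h1; try nra.
  rewrite [((1 + a + x ^+ 2) * _) `^ s]powRM in h1; try nra.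
  rewrite [(Y * Y) `^ s]powRM in h1; try nra.
  have ex : x = (x ^+ 2) `^ s * x `^ (1 - 2 * s).
    rewrite -pw2; last lra.
    rewrite -powRrM -pwD //.
    have -> : 2 * s + (1 - 2 * s) = 1 by ring.
    by rewrite pw1 //; lra.
  have eY : Y `^ s * Y `^ s * Y `^ (1 - 2 * s) = Y.
    rewrite -!pwD //.
    have -> : s + s + (1 - 2 * s) = 1 by ring.
    by rewrite pw1 //; lra.
  have hx : x `^ (1 - 2 * s) <= Y `^ (1 - 2 * s) by apply: pw_le_pos; lra.
  have q1 := powR_ge0 (x ^+ 2) s.
  have q2 := powR_ge0 x (1 - 2 * s).
  have q3 := powR_ge0 Y s.
  rewrite [in X in X <= _]ex.
  rewrite -[in X in _ <= X]eY.
  rewrite mulrA.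
  apply: le_trans (_ : (1 + a + x ^+ 2) `^ s * (Y `^ s * Y `^ s) * x `^ (1 - 2 * s) <= _).
    by apply: ler_wpM2r => //.
  rewrite -!mulrA; apply: ler_wpM2l => //.
  apply: ler_wpM2l => //; apply: ler_wpM2l => //.
- rewrite ifF; last by apply/negP => /andP [_ hh]; lra.
  have hP : (1 + a + A) `^ s <= (2 * (1 + a + x ^+ 2) + (1 + Tt)) `^ s.
    apply: pw_le_pos; lra.
  have T1 : 0 < 1 + Tt by lra.
  have := @sum_pow_bound s _ _ (ltW s0) M0 T1.
  nra.
Qed.
End S.

Theorem lemma5p1 (R : realType) (n : nat) (s b eps : R) :
  (2 <= n)%N -> 0 <= b -> b < 2^-1 -> 0 < eps -> eps <= 1 - 2 * b ->
  exists C : R, 0 < C /\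
    forall (xi' : 'rV[R]_(n.-1)) (xn tau : R),
      Q1 s eps xi' xn tau <= C * Q1bound s b xi' xn tau.
Proof.
move=> _ b0 bh e0 eb.
have c0 := powR_ge0 3 s.
exists (8 * (1 + 3 `^ s)); split; first lra.
move=> xi' xn tau.
rewrite /Q1 /Q1bound /=.
have a0 : 0 <= sqnorm xi' by apply: sumr_ge0 => i _; exact: sqr_ge0.
move: a0; move: (sqnorm xi') => a a0.
set E := (1 + `|tau + a + xn ^+ 2|) `^ (- (2 * b)).
have E0 : 0 <= E by exact: powR_ge0.
set bnd := (if (- 2^-1 <= s) && (s <= 2^-1) then (1 + a + xn ^+ 2) `^ s
                     else (1 + a + xn ^+ 2) `^ s + (1 + `|tau|) `^ s).
have -> : (if (- 2^-1 <= s) && (s <= 2^-1) then (1 + a + xn ^+ 2) `^ s * E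
    else ((1 + a + xn ^+ 2) `^ s + (1 + `|tau|) `^ s) * E) = bnd * E.
  by rewrite /bnd; case: ifP.
have bnd0 : 0 <= bnd.
  rewrite /bnd; case: ifP => _; rewrite ?addr_ge0 // powR_ge0 //.
have rhs0 : 0 <= 8 * (1 + 3 `^ s) * (bnd * E).
  apply: mulr_ge0; [lra| exact: mulr_ge0].
case: ifP => [/andP [h1 h2]|_]; last by [].
have [xn0|xn0] := lerP xn 0.
  apply: le_trans rhs0.
  apply: mulr_le0_ge0; last by rewrite invr_ge0 powR_ge0.
  apply: mulr_ge0_le0; [apply: mulr_ge0; exact: powR_ge0 | lra].
apply: le_trans (@core R s b eps a tau xn b0 bh e0 eb a0 xn0 h1 h2) _.
have K := @kbound R s a tau xn a0 xn0 h1 h2.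
rewrite -/E -/bnd in K *.
rewrite -!mulrA; apply: ler_wpM2l; first lra.
rewrite !mulrA; apply: ler_wpM2r => //; by rewrite -mulrA.
Qed.
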